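(* Let $w>0$, $0<\lambda\le\frac12$ and $1\le E\le\frac{1}{2\lambda}$. Let $x:(0,\infty)\to(0,\infty)$ be differentiable and strictly decreasing with $\frac{x(p)}{p}\le -x'(p)\le E\frac{x(p)}{p}$ for all $p>0$. Define the update $p'=p\big(1+\lambda\min\{1,\frac{x(p)-w}{w}\}\big)$ and the potential $\phi(p)=|x(p)-w|\,p$. Then for every $p>0$, \[ \phi(p)-\phi(p')\ \ge\ w\,|p'-p|, \] where $w|p'-p|=\lambda\phi(p)$ if $x(p)\le 2w$, and $w|p'-p|=\lambda\frac{w}{x(p)-w}\phi(p)$ if $x(p)\ge 2w$. Consequently, if $p_0>0$ and $p_{k+1}=p_k'$ for $k\ge 0$, then for all $k\ge 0$, \[ \phi(p_k)\le\Big(1-\lambda\min\Big\{1,\tfrac{w}{|x(p_0)-w|}\Big\}\Big)^k\phi(p_0). \] *)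

(* Defs.v *)
From Stdlib Require Import Reals.
Open Scope R_scope.

Definition upd (x : R -> R) (w lam p : R) : R :=
  p * (1 + lam * Rmin 1 ((x p - w) / w)).

Definition phi (x : R -> R) (w p : R) : R := Rabs (x p - w) * p.

Fixpoint iter_upd (x : R -> R) (w lam p0 : R) (k : nat) : R :=
  match k with
  | O => p0
  | S k' => upd x w lam (iter_upd x w lam p0 k')
  end.

(* Main.v *)
Require Import Defs.
From Stdlib Require Import Reals Lra Psatz.
Open Scope R_scope.

Lemma pureA (w lam E y y' d : R) : 0<w -> 0<lam -> lam <= 1/2 -> 1 <= E -> E*lam <= 1/2 ->
  w < y -> 0 < d -> y'*(1+d) <= y -> y - y' <= E*y*d ->
  ((d = lam /\ 2*w <= y) \/ (d*w = lam*(y-w) /\ y < 2*w)) ->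
  Rabs (y'-w)*(1+d) <= y - w - w*d /\ y' <= y.
Proof.
  intros. assert (Hy' : w <= y').
  { destruct H8 as [[-> H8]|[H8 H9]].
    - nra.
    - assert (E*d*w <= (y-w)/2) by nra.
      assert (w*(w-y') <= (w-y)*(2*w-y)/2) by nra. nra. }
  rewrite Rabs_right by lra. split; nra.
Qed.

Lemma pureB (w lam E y y' d : R) : 0<w -> 0<lam -> lam <= 1/2 -> 1 <= E -> E*lam <= 1/2 ->
  0 < y -> y < w -> d*w = lam*(y-w) -> y <= (1+d)*y' -> (1+d)*(y'-y) <= -E*d*y' ->
  Rabs (y'-w)*(1+d) <= w - y + w*d /\ y' <= 2*w.
Proof.
  intros. set (s := (w-y)/w).
  assert (Hs : y = w*(1-s)) by (unfold s; field; lra).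
  assert (Hs0 : 0 < s < 1). { unfold s; split.
     apply Rdiv_lt_0_compat; lra. apply Rmult_lt_reg_r with w; [lra|]. field_simplify; lra. }
  assert (Hd : d = - lam * s) by (apply Rmult_eq_reg_r with w; [|lra]; rewrite H6, Hs; ring).
  clearbody s. subst y d.
  assert (Ht : 0 < 1 - lam*s) by nra.
  destruct (Rle_or_lt w y') as [Hy|Hy].
  - rewrite Rabs_right by lra.
    assert (HEs : E*lam*s <= s/2) by nra.
    set (K := 1 - lam*s - E*lam*s).
    assert (HK : 1 - lam*s - s/2 <= K) by (unfold K; lra).
    assert (HK0 : 0 < 1 - lam*s - s/2) by nra.
    assert (Hy'K : y'*K <= (1-lam*s)*(w*(1-s))) by (unfold K; nra).
    assert (Hg : 0 <= (1-lam)*(1-2*lam) + (1-s)*(1/2 + 2*lam - 2*lam*lam - lam*lam*s)) by nra.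
    assert (Hmain : (1-lam*s)*(1-lam*s)*(w*(1-s)) <= (1-lam*s-s/2)*(w*(1+s-2*lam*s))) by nra.
    assert (y'*(1-lam*s) <= 2*w*(1-lam*s) - w*(1-s)).
    { apply Rmult_le_reg_r with (1-lam*s-s/2); [lra|].
      assert (y'*(1-lam*s-s/2) <= y'*K) by nra. nra. }
    split; nra.
  - rewrite Rabs_left by lra. split; nra.
Qed.

Lemma L1 (E : R) (x dx : R -> R)
  (hdiff : forall p, 0 < p -> derivable_pt_lim x p (dx p))
  (hder : forall p, 0 < p -> x p / p <= - dx p /\ - dx p <= E * (x p / p)) :
  forall a b, 0 < a -> a < b -> b * x b <= a * x a.
Proof.
  intros a b Ha Hab.
  destruct (MVT_cor2 (mult_fct id x) (fun c => 1 * x c + id c * dx c) a b Hab) as [c [Hc Hac]].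
  { intros c Hc. apply derivable_pt_lim_mult. apply derivable_pt_lim_id. apply hdiff; lra. }
  unfold mult_fct, id in Hc.
  assert (Hc0 : 0 < c) by lra.
  destruct (hder c Hc0) as [H1 _].
  assert (x c <= - c * dx c).
  { replace (x c) with (x c / c * c) by (field; lra). nra. }
  nra.
Qed.

Lemma L23 (E : R) (x dx : R -> R) (hE1 : 1 <= E)
  (hpos : forall p, 0 < p -> 0 < x p)
  (hdiff : forall p, 0 < p -> derivable_pt_lim x p (dx p))
  (hdec : forall a b, 0 < a -> a < b -> x b < x a)
  (hder : forall p, 0 < p -> x p / p <= - dx p /\ - dx p <= E * (x p / p)) :
  forall a b, 0 < a -> a < b -> x a - x b <= E * (x a / a) * (b - a).
Proof.
  intros a b Ha Hab.
  destruct (MVT_cor2 x dx a b Hab) as [c [Hc Hac]].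
  { intros c Hc. apply hdiff; lra. }
  assert (Hc0 : 0 < c) by lra.
  destruct (hder c Hc0) as [_ H2].
  assert (Hq : x c / c <= x a / a).
  { unfold Rdiv. apply Rmult_le_compat.
    - left; apply hpos; lra.
    - left; apply Rinv_0_lt_compat; lra.
    - left; apply hdec; lra.
    - apply Rinv_le_contravar; lra. }
  assert (- dx c <= E * (x a / a)) by nra.
  nra.
Qed.

Lemma step (w lam E : R) (x dx : R -> R)
  (hw : 0 < w) (hlam0 : 0 < lam) (hlam1 : lam <= 1/2)
  (hE1 : 1 <= E) (hE2 : E <= 1 / (2 * lam))
  (hpos : forall p, 0 < p -> 0 < x p)
  (hdiff : forall p, 0 < p -> derivable_pt_lim x p (dx p))
  (hdec : forall a b, 0 < a -> a < b -> x b < x a)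
  (hder : forall p, 0 < p -> x p / p <= - dx p /\ - dx p <= E * (x p / p)) :
  forall p, 0 < p -> 0 < upd x w lam p /\
    phi x w p - phi x w (upd x w lam p) >= w * Rabs (upd x w lam p - p) /\
    x (upd x w lam p) <= Rmax (2*w) (x p).
Proof.
  intros p Hp.
  assert (HEl : E*lam <= 1/2).
  { apply Rmult_le_compat_r with (r:=lam) in hE2; [|lra].
    replace (1/(2*lam)*lam) with (1/2) in hE2 by (field; lra). lra. }
  pose proof (L1 E x dx hdiff hder) as HL1.
  pose proof (L23 E x dx hE1 hpos hdiff hdec hder) as HL23.
  unfold phi, upd.
  set (y := x p) in *.
  assert (Hy0 : 0 < y) by (apply hpos; lra).
  destruct (total_order_T y w) as [[Hlt|Heq]|Hgt].
  -
    assert (Hm : Rmin 1 ((y-w)/w) = (y-w)/w).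
    { apply Rmin_right. assert ((y-w)/w < 0) by (apply Rdiv_neg_pos; lra). lra. }
    rewrite Hm. set (d := lam * ((y-w)/w)).
    assert (Hdw : d*w = lam*(y-w)) by (unfold d; field; lra).
    assert (Hd0 : d < 0) by nra.
    assert (Hd1 : -lam < d) by nra.
    set (u := p*(1+d)).
    assert (Hu : 0 < u) by (unfold u; nra).
    assert (Hup : u < p) by (unfold u; nra).
    set (y' := x u).
    assert (H1 : p * y <= u * y') by (apply HL1; lra).
    assert (H1' : y <= (1+d)*y') by (unfold u in H1; nra).
    assert (H2 := HL23 u p Hu Hup). fold y' in H2. fold y in H2.
    assert (H2' : (1+d)*(y'-y) <= -E*d*y').
    { replace (E * (y'/u) * (p-u)) with (-E*d*y'/(1+d)) in H2 by (unfold u; field; lra).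
      apply Rmult_le_compat_l with (r := 1+d) in H2; [|lra].
      replace ((1+d)*(-E*d*y'/(1+d))) with (-E*d*y') in H2 by (field; lra). lra. }
    destruct (pureB w lam E y y' d hw hlam0 hlam1 hE1 HEl Hy0 Hlt Hdw H1' H2') as [A B].
    split; [exact Hu|split].
    + rewrite Rabs_left by lra. rewrite (Rabs_left (u-p)) by lra.
      unfold u. nra.
    + eapply Rle_trans; [exact B|apply Rmax_l].
  - rewrite Heq. replace ((w-w)/w) with 0 by (field; lra).
    rewrite Rmin_right by lra. rewrite Rmult_0_r, Rplus_0_r, Rmult_1_r.
    fold y. try rewrite Heq.
    split; [lra|split].
    + replace (p-p) with 0 by ring. rewrite Rabs_R0. lra.
    + apply Rle_trans with (2*w); [lra|apply Rmax_l].
  -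
    assert (Hcase : exists d, Rmin 1 ((y-w)/w) * lam = d /\
              ((d = lam /\ 2*w <= y) \/ (d*w = lam*(y-w) /\ y < 2*w))).
    { destruct (Rle_or_lt (2*w) y) as [Hc|Hc].
      - exists lam. rewrite Rmin_left. split; [ring|left; lra].
        apply Rmult_le_reg_r with w; [lra|]. unfold Rdiv. rewrite Rmult_assoc, Rinv_l by lra. lra.
      - exists (lam*((y-w)/w)). rewrite Rmin_right. split; [ring|right; split; [field; lra|lra]].
        apply Rmult_le_reg_r with w; [lra|]. unfold Rdiv. rewrite Rmult_assoc, Rinv_l by lra. lra. }
    destruct Hcase as [d [Hdd Hdc]].
    replace (lam * Rmin 1 ((y-w)/w)) with d by (rewrite <- Hdd; ring).
    assert (Hd0 : 0 < d) by (destruct Hdc as [[-> _]|[H _]]; nra).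
    set (u := p*(1+d)).
    assert (Hu : 0 < u) by (unfold u; nra).
    assert (Hup : p < u) by (unfold u; nra).
    set (y' := x u).
    assert (H1 : u * y' <= p * y) by (apply HL1; lra).
    assert (H1' : y'*(1+d) <= y) by (unfold u in H1; nra).
    assert (H2 := HL23 p u Hp Hup). fold y' in H2. fold y in H2.
    assert (H2' : y - y' <= E*y*d).
    { replace (E * (y/p) * (u-p)) with (E*y*d) in H2 by (unfold u; field; lra). lra. }
    destruct (pureA w lam E y y' d hw hlam0 hlam1 hE1 HEl Hgt Hd0 H1' H2' Hdc) as [A B].
    split; [exact Hu|split].
    + rewrite (Rabs_right (y-w)) by lra. rewrite (Rabs_right (u-p)) by lra.
      unfold u. nra.
    + eapply Rle_trans; [exact B|apply Rmax_r].
Qed.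

Theorem mainTheorem5 (w lam E : R) (x dx : R -> R)
  (hw : 0 < w) (hlam0 : 0 < lam) (hlam1 : lam <= 1/2)
  (hE1 : 1 <= E) (hE2 : E <= 1 / (2 * lam))
  (hpos : forall p, 0 < p -> 0 < x p)
  (hdiff : forall p, 0 < p -> derivable_pt_lim x p (dx p))
  (hdec : forall a b, 0 < a -> a < b -> x b < x a)
  (hder : forall p, 0 < p -> x p / p <= - dx p /\ - dx p <= E * (x p / p)) :
  (forall p, 0 < p ->
     phi x w p - phi x w (upd x w lam p) >= w * Rabs (upd x w lam p - p)) /\
  (forall p, 0 < p -> x p <= 2 * w ->
     w * Rabs (upd x w lam p - p) = lam * phi x w p) /\
  (forall p, 0 < p -> x p >= 2 * w ->
     w * Rabs (upd x w lam p - p) = lam * (w / (x p - w)) * phi x w p) /\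
  (forall p0, 0 < p0 -> forall k : nat,
     phi x w (iter_upd x w lam p0 k)
       <= (1 - lam * Rmin 1 (w / Rabs (x p0 - w))) ^ k * phi x w p0).
Proof.
  pose proof (step w lam E x dx hw hlam0 hlam1 hE1 hE2 hpos hdiff hdec hder) as HS.
  assert (P2 : forall p, 0 < p -> x p <= 2 * w ->
     w * Rabs (upd x w lam p - p) = lam * phi x w p).
  { intros p Hp Hx. unfold upd, phi.
    rewrite Rmin_right.
    2:{ apply Rmult_le_reg_r with w; [lra|]. unfold Rdiv. rewrite Rmult_assoc, Rinv_l by lra. lra. }
    replace (p * (1 + lam * ((x p - w) / w)) - p) with ((x p - w) * (p*lam/w)) by (field; lra).
    rewrite Rabs_mult. rewrite (Rabs_right (p*lam/w)).
    2:{ left. apply Rdiv_lt_0_compat; nra. }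
    field; lra. }
  assert (P3 : forall p, 0 < p -> x p >= 2 * w ->
     w * Rabs (upd x w lam p - p) = lam * (w / (x p - w)) * phi x w p).
  { intros p Hp Hx. unfold upd, phi.
    rewrite Rmin_left.
    2:{ apply Rmult_le_reg_r with w; [lra|]. unfold Rdiv. rewrite Rmult_assoc, Rinv_l by lra. lra. }
    replace (p * (1 + lam * 1) - p) with (p*lam) by ring.
    rewrite Rabs_right by nra. rewrite (Rabs_right (x p - w)) by lra.
    field; lra. }
  split; [intros p Hp; apply HS; exact Hp|].
  split; [exact P2|]. split; [exact P3|].
  intros p0 Hp0.
  set (m0 := Rmin 1 (w / Rabs (x p0 - w))).
  assert (Hm1 : m0 <= 1) by apply Rmin_l.
  assert (Hphi0 : forall p, 0 < p -> 0 <= phi x w p).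
  { intros p Hp. unfold phi. apply Rmult_le_pos; [apply Rabs_pos|lra]. }
  assert (Inv : forall k, 0 < iter_upd x w lam p0 k /\
     x (iter_upd x w lam p0 k) <= Rmax (2*w) (x p0) /\
     phi x w (iter_upd x w lam p0 k) <= (1 - lam * m0) ^ k * phi x w p0).
  { induction k as [|k IH].
    - cbn [iter_upd pow]. split; [exact Hp0|split; [apply Rmax_r|lra]].
    - destruct IH as [Hp [Hx Hph]].
      cbn [iter_upd pow]. set (p := iter_upd x w lam p0 k) in *.
      destruct (HS p Hp) as [Hu [Hd Hx']].
      assert (Hlow : lam * m0 * phi x w p <= w * Rabs (upd x w lam p - p)).
      { destruct (Rle_or_lt (x p) (2*w)) as [Hc|Hc].
        - rewrite P2 by lra. pose proof (Hphi0 p Hp). assert (0 <= lam * phi x w p) by (apply Rmult_le_pos; lra). assert (0 <= lam * phi x w p * (1 - m0)) by (apply Rmult_le_pos; lra). lra.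
        - rewrite P3 by lra. pose proof (Hphi0 p Hp).
          assert (m0 <= w / (x p - w)).
          { unfold Rmax in Hx. destruct (Rle_dec (2*w) (x p0)) as [Hc0|Hc0].
            - apply Rle_trans with (w / Rabs (x p0 - w)); [apply Rmin_r|].
              rewrite Rabs_right by lra. unfold Rdiv. apply Rmult_le_compat_l; [lra|].
              apply Rinv_le_contravar; lra.
            - lra. }
          assert (0 <= lam * phi x w p) by nra. nra. }
      split; [exact Hu|split].
      + eapply Rle_trans; [exact Hx'|]. apply Rmax_lub; [apply Rmax_l|exact Hx].
      + assert (0 <= 1 - lam*m0) by nra.
        apply Rle_trans with ((1 - lam*m0) * phi x w p); [nra|].
        rewrite Rmult_assoc. apply Rmult_le_compat_l; lra. }
  intro k. apply Inv.
Qed.
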